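(* Let $(S,\alpha)$ be a twisted K3 surface with $d=\mathrm{ord}(\alpha)$, and let $B\in\frac1d H^2(S,\mathbb Z)$ be a B-field lift of $\alpha$. Let $\kappa:\widetilde{NS}(S)\to H^0(S,\mathbb Q)\oplus NS(S)\oplus H^4(S,\mathbb Q)$ be $\kappa(a,l,b)=(da,l,\tfrac1d b)$. Then $e^B\circ\kappa$ is an orientation-preserving isometry $$e^B\circ\kappa:\widetilde{NS}(S)\xrightarrow{\sim}\big\langle \widetilde{NS}(S,B),\,(0,0,-\tfrac1d)\big\rangle .$$
   Context: $S$ is a complex projective K3 surface with $NS(S)$, holomorphic 2-form class $\omega_S$. Mukai lattice $\widetilde H(S,\mathbb Z)=H^0\oplus H^2\oplus H^4$ with elements $(a,l,b)$ and pairing $((a,l,b),(a',l',b'))=(l,l')-ab'-a'b$, extended $\mathbb Q$-bilinearly; $\widetilde{NS}(S)=H^0\oplus NS(S)\oplus H^4$. For $B\in H^2(S,\mathbb Q)$, $e^B(a,l,b)=(a,l+aB,b+(B,l)+\frac a2(B,B))$. A B-field lift of $\alpha\in\mathrm{Br}(S)\cong H^2(S,\mathbb Q)/(NS(S)_{\mathbb Q}+H^2(S,\mathbb Z))$ is a preimage $B$. $\widetilde{NS}(S,B)=e^B(\omega_S)^\perp\cap\widetilde H(S,\mathbb Z)$ where $e^B(\omega_S)=(0,\omega_S,(B,\omega_S))$; $\langle \widetilde{NS}(S,B),(0,0,-\frac1d)\rangle$ denotes the lattice generated by these in $\widetilde H(S,\mathbb Q)$. Orientations: for any $B'$ (including $B'=0$),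 the signature-$(2,\rho(S))$ lattice $\widetilde{NS}(S,B')$ and any lattice in $\widetilde{NS}(S,B')_{\mathbb Q}$ is oriented by declaring the positive 2-plane with ordered basis $e^{B'}(1,0,-1),e^{B'}(0,h,0)$, $h$ ample, positively oriented. *)

(* Defs.v *)
From HB Require Import structures.
From mathcomp Require Import all_boot all_order all_algebra.
Set Implicit Arguments. Unset Strict Implicit. Unset Printing Implicit Defensive.
Import Order.TTheory GRing.Theory Num.Theory.
Local Open Scope ring_scope.

(* ---------- The K3 lattice H^2(S,Z) = U^3 (+) E8(-1)^2 (fixed marking) ---------- *)
Definition k3rank : nat := 22.

(* E8 Dynkin diagram: chain 0-1-2-3-4-5-6, node 7 attached to node 4 *)
Definition e8_edge (i j : nat) : bool :=
  [|| (i.+1 == j) && (j <= 6)%N, (j.+1 == i) && (i <= 6)%N,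
      (i == 4%N) && (j == 7%N) | (i == 7%N) && (j == 4%N)].

(* entries of E8(-1) = minus the Cartan matrix *)
Definition e8m_entry (i j : nat) : rat :=
  if i == j then -2 else if e8_edge i j then 1 else 0.

Definition k3_entry (i j : nat) : rat :=
  if (i < 6)%N && (j < 6)%N then
    (if (i./2 == j./2) && (i != j) then 1 else 0)
  else if [&& (6 <= i)%N, (i < 14)%N, (6 <= j)%N & (j < 14)%N] then
    e8m_entry (i - 6) (j - 6)
  else if [&& (14 <= i)%N, (i < 22)%N, (14 <= j)%N & (j < 22)%N] then
    e8m_entry (i - 14) (j - 14)
  else 0.

Definition K3 : 'M[rat]_k3rank := \matrix_(i, j) k3_entry i j.

(* the intersection pairing on H^2(S,Q) = Q^22 *)
Definition dot2 (x y : 'rV[rat]_k3rank) : rat :=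
  \sum_(i < k3rank) \sum_(j < k3rank) x 0 i * K3 i j * y 0 j.

(* its C-bilinear extension, x rational, w complex; C is a numClosedFieldType
   playing the role of the complex numbers *)
Definition dot2C (C : numClosedFieldType) (x : 'rV[rat]_k3rank) (w : 'rV[C]_k3rank) : C :=
  \sum_(i < k3rank) \sum_(j < k3rank) ratr (x 0 i * K3 i j) * w 0 j.

Definition dotCC (C : numClosedFieldType) (v w : 'rV[C]_k3rank) : C :=
  \sum_(i < k3rank) \sum_(j < k3rank) v 0 i * ratr (K3 i j) * w 0 j.

(* integral classes: elements of H^2(S,Z) *)
Definition intvec (x : 'rV[rat]_k3rank) : Prop := forall i, x 0 i \is a Num.int.

(* omega is the class of a holomorphic 2-form: (w,w)=0, (w,wbar)>0 *)
Definition is_period (C : numClosedFieldType) (w : 'rV[C]_k3rank) : Prop :=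
  dotCC w w = 0 /\ 0 < dotCC w (map_mx (fun z => z^*) w).

(* NS(S) = H^{1,1} cap H^2(S,Z) = omega^perp cap H^2(S,Z)  (Lefschetz (1,1)) *)
Definition in_NS (C : numClosedFieldType) (w : 'rV[C]_k3rank) (l : 'rV[rat]_k3rank) : Prop :=
  intvec l /\ dot2C l w = 0.

(* NS(S)_Q inside H^2(S,Q) *)
Definition in_NSQ (C : numClosedFieldType) (w : 'rV[C]_k3rank) (l : 'rV[rat]_k3rank) : Prop :=
  exists m : nat, (0 < m)%N /\ in_NS w (m%:R *: l).

(* ample class (lattice-theoretic: h in NS, h^2>0, h not orthogonal to any (-2)-class) *)
Definition is_ample (C : numClosedFieldType) (w : 'rV[C]_k3rank) (h : 'rV[rat]_k3rank) : Prop :=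
  [/\ in_NS w h, 0 < dot2 h h &
      forall delta, in_NS w delta -> dot2 delta delta = -2 -> dot2 h delta != 0].

(* x is zero in Br(S) = H^2(S,Q)/(NS(S)_Q + H^2(S,Z)) *)
Definition brauer_trivial (C : numClosedFieldType) (w : 'rV[C]_k3rank) (x : 'rV[rat]_k3rank) : Prop :=
  exists l m, in_NSQ w l /\ intvec m /\ x = l + m.

(* d = ord(alpha), alpha = [B] in Br(S) *)
Definition brauer_order (C : numClosedFieldType) (w : 'rV[C]_k3rank) (B : 'rV[rat]_k3rank) (d : nat) : Prop :=
  [/\ (0 < d)%N, brauer_trivial w (d%:R *: B) &
      forall k : nat, (0 < k)%N -> (k < d)%N -> ~ brauer_trivial w (k%:R *: B)].

Record mukai := Mk { mk0 : rat; mk2 : 'rV[rat]_k3rank; mk4 : rat }.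

Definition madd (v w : mukai) : mukai := Mk (mk0 v + mk0 w) (mk2 v + mk2 w) (mk4 v + mk4 w).
Definition mopp (v : mukai) : mukai := Mk (- mk0 v) (- mk2 v) (- mk4 v).
Definition mzero : mukai := Mk 0 0 0.

Definition mpair (v w : mukai) : rat :=
  dot2 (mk2 v) (mk2 w) - mk0 v * mk4 w - mk0 w * mk4 v.

Definition eB (B : 'rV[rat]_k3rank) (v : mukai) : mukai :=
  Mk (mk0 v) (mk2 v + mk0 v *: B) (mk4 v + dot2 B (mk2 v) + mk0 v / 2%:R * dot2 B B).

Definition kappa (d : nat) (v : mukai) : mukai :=
  Mk (d%:R * mk0 v) (mk2 v) (mk4 v / d%:R).

Definition mint (v : mukai) : Prop :=
  [/\ mk0 v \is a Num.int, intvec (mk2 v) & mk4 v \is a Num.int].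

(* NS~(S) = H^0 (+) NS(S) (+) H^4 *)
Definition tNS (C : numClosedFieldType) (w : 'rV[C]_k3rank) (v : mukai) : Prop :=
  [/\ mk0 v \is a Num.int, in_NS w (mk2 v) & mk4 v \is a Num.int].

(* pairing of a rational Mukai vector with e^B(omega) = (0, omega, (B,omega)) *)
Definition mpair_eBomega (C : numClosedFieldType) (w : 'rV[C]_k3rank) (B : 'rV[rat]_k3rank)
  (v : mukai) : C :=
  dot2C (mk2 v) w - ratr (mk0 v) * dot2C B w.

(* NS~(S,B) = e^B(omega)^perp cap H~(S,Z) *)
Definition tNSB (C : numClosedFieldType) (w : 'rV[C]_k3rank) (B : 'rV[rat]_k3rank) (v : mukai) : Prop :=
  mint v /\ mpair_eBomega w B v = 0.

Inductive zspan (P : mukai -> Prop) : mukai -> Prop :=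
| zspan0 : zspan P mzero
| zspan_gen v : P v -> zspan P v
| zspan_add v w : zspan P v -> zspan P w -> zspan P (madd v w)
| zspan_opp v : zspan P v -> zspan P (mopp v).

Definition tNSB_ext (C : numClosedFieldType) (w : 'rV[C]_k3rank) (B : 'rV[rat]_k3rank) (d : nat) :
  mukai -> Prop :=
  zspan (fun v => tNSB w B v \/ v = Mk 0 0 (- (d%:R)^-1)).

Definition lattice_isometry (L1 L2 : mukai -> Prop) (f : mukai -> mukai) : Prop :=
  [/\ forall x, L1 x -> L2 (f x),
      forall x y, L1 x -> L1 y -> f (madd x y) = madd (f x) (f y),
      forall x y, L1 x -> L1 y -> f x = f y -> x = y,
      forall y, L2 y -> exists2 x, L1 x & f x = y &
      forall x y, L1 x -> L1 y -> mpair (f x) (f y) = mpair x y].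

(* Two ordered bases (p1,p2), (q1,q2) of positive definite 2-planes in a space of
   signature (2,n) define the same orientation of positive 2-planes iff the
   orthogonal projection of (p1,p2) onto span(q1,q2) is positively oriented
   w.r.t. (q1,q2), i.e. iff det [(p_i,q_j)] > 0. *)
Definition same_orientation (p1 p2 q1 q2 : mukai) : Prop :=
  0 < mpair p1 q1 * mpair p2 q2 - mpair p1 q2 * mpair p2 q1.

(* f : NS~(S) -> (lattice in NS~(S,B)_Q) is orientation preserving: source oriented by
   (1,0,-1),(0,h,0) (B'=0); target oriented by e^B(1,0,-1), e^B(0,h,0). *)
Definition orientation_preserving (h B : 'rV[rat]_k3rank) (f : mukai -> mukai) : Prop :=
  same_orientation (f (Mk 1 0 (-1))) (f (Mk 0 h 0)) (eB B (Mk 1 0 (-1))) (eB B (Mk 0 h 0)).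

(* Main.v *)
Require Import Defs.
From HB Require Import structures.
From mathcomp Require Import all_boot all_order all_algebra.
From Stdlib Require Import Ring Field.
Import Order.TTheory GRing.Theory Num.Theory.
Local Open Scope ring_scope.

Lemma e8_edge_sym i j : e8_edge i j = e8_edge j i.
Proof.
rewrite /e8_edge.
case: (i.+1 == j); case: (j.+1 == i); case: (i <= 6)%N; case: (j <= 6)%N;
case: (i == 4)%N; case: (j == 4)%N; case: (i == 7)%N; case: (j == 7)%N => //.
Qed.

Lemma e8m_sym i j : e8m_entry i j = e8m_entry j i.
Proof. by rewrite /e8m_entry eq_sym e8_edge_sym. Qed.

Lemma and4sw (a b c e : bool) : [&& a, b, c & e] = [&& c, e, a & b].
Proof. by case: a; case: b; case: c; case: e. Qed.

Lemma k3_entry_sym i j : k3_entry i j = k3_entry j i.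
Proof.
rewrite /k3_entry (andbC (j < 6)%N) (eq_sym j./2) (eq_sym j i) (e8m_sym (j - 6)) (e8m_sym (j - 14)).
by rewrite (and4sw (6 <= j)%N) (and4sw (14 <= j)%N).
Qed.

Lemma K3_sym i j : K3 i j = K3 j i.
Proof. by rewrite !mxE k3_entry_sym. Qed.

Lemma K3_int i j : K3 i j \is a Num.int.
Proof.
rewrite mxE /k3_entry /e8m_entry.
by repeat case: ifP => _; rewrite ?rpred0 ?rpred1 ?rpredN ?natr_int.
Qed.

Lemma K3_diag i : K3 i i / 2%:R \is a Num.int.
Proof.
rewrite mxE /k3_entry /e8m_entry !eqxx /=.
have h : (-2 : rat) / 2%:R = -1 by rewrite mulNr divff.
by repeat case: ifP => _; rewrite ?mul0r ?rpred0 ?h ?rpredN ?rpred1.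
Qed.
Definition Um : 'M[rat]_k3rank :=
  \matrix_(i, j) if (i < j)%N then K3 i j else if i == j then K3 i j / 2%:R else 0.

Lemma K3_split i j : K3 i j = Um i j + Um j i.
Proof.
rewrite [Um i j]mxE [Um j i]mxE; case: (ltngtP i j) => h.
- case: eqP => [e|_]; [by move: h; rewrite e ltnn | by rewrite addr0].
- case: eqP => [e|_]; [by move: h; rewrite e ltnn | by rewrite add0r K3_sym].
- have e : i = j by apply: val_inj.
  by rewrite e eqxx -splitr.
Qed.

Lemma Um_int i j : Um i j \is a Num.int.
Proof.
rewrite mxE; case: ifP => _; first exact: K3_int.
case: eqP => [->|_]; [exact: K3_diag | exact: rpred0].
Qed.

Lemma dot2Dl x y z : dot2 (x + y) z = dot2 x z + dot2 y z.
Proof.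
rewrite /dot2 -big_split; apply: eq_bigr => i _; rewrite -big_split.
by apply: eq_bigr => j _; rewrite mxE !mulrDl.
Qed.

Lemma dot2Zl c x z : dot2 (c *: x) z = c * dot2 x z.
Proof.
rewrite /dot2 mulr_sumr; apply: eq_bigr => i _; rewrite mulr_sumr.
by apply: eq_bigr => j _; rewrite mxE !mulrA.
Qed.

Lemma dot2_sym x y : dot2 x y = dot2 y x.
Proof.
rewrite /dot2 exchange_big /=; apply: eq_bigr => i _; apply: eq_bigr => j _.
by rewrite K3_sym mulrC [x 0 j * _]mulrC mulrA.
Qed.

Lemma dot2Dr x y z : dot2 z (x + y) = dot2 z x + dot2 z y.
Proof. by rewrite !(dot2_sym z) dot2Dl. Qed.

Lemma dot2Zr c x z : dot2 z (c *: x) = c * dot2 z x.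
Proof. by rewrite !(dot2_sym z) dot2Zl. Qed.

Lemma dot2Nl x z : dot2 (- x) z = - dot2 x z.
Proof. by rewrite -scaleN1r dot2Zl mulN1r. Qed.

Lemma dot2Nr x z : dot2 z (- x) = - dot2 z x.
Proof. by rewrite !(dot2_sym z) dot2Nl. Qed.

Lemma dot2_0l z : dot2 0 z = 0.
Proof. by rewrite -(scale0r (0 : 'rV[rat]_k3rank)) dot2Zl mul0r. Qed.

Lemma dot2_0r z : dot2 z 0 = 0.
Proof. by rewrite dot2_sym dot2_0l. Qed.

Lemma intvec0 : intvec 0.
Proof. by move=> i; rewrite mxE rpred0. Qed.

Lemma intvecD x y : intvec x -> intvec y -> intvec (x + y).
Proof. by move=> hx hy i; rewrite mxE rpredD. Qed.

Lemma intvecN x : intvec x -> intvec (- x).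
Proof. by move=> hx i; rewrite mxE rpredN. Qed.

Lemma intvecB x y : intvec x -> intvec y -> intvec (x - y).
Proof. by move=> hx hy; apply: intvecD => //; apply: intvecN. Qed.

Lemma intvecZ c x : c \is a Num.int -> intvec x -> intvec (c *: x).
Proof. by move=> hc hx i; rewrite mxE rpredM. Qed.

Lemma dot2_int x y : intvec x -> intvec y -> dot2 x y \is a Num.int.
Proof.
move=> hx hy; apply: rpred_sum => i _; apply: rpred_sum => j _.
by rewrite rpredM // rpredM // K3_int.
Qed.

Lemma dot2_even x : intvec x -> dot2 x x / 2%:R \is a Num.int.
Proof.
move=> hx.
set S := \sum_(i < k3rank) \sum_(j < k3rank) x 0 i * Um i j * x 0 j.
have hS : S \is a Num.int.
  apply: rpred_sum => i _; apply: rpred_sum => j _.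
  by rewrite rpredM // rpredM // Um_int.
have e1 : dot2 x x = S + \sum_(i < k3rank) \sum_(j < k3rank) x 0 i * Um j i * x 0 j.
  rewrite /dot2 /S -big_split; apply: eq_bigr => i _.
  rewrite -big_split /=; apply: eq_bigr => j _.
  by rewrite K3_split mulrDr mulrDl.
have e2 : \sum_(i < k3rank) \sum_(j < k3rank) x 0 i * Um j i * x 0 j = S.
  rewrite /S exchange_big /=; apply: eq_bigr => i _; apply: eq_bigr => j _.
  by rewrite mulrC [x 0 j * _]mulrC mulrA.
by rewrite e1 e2 mulrDl -splitr.
Qed.

Lemma dot2CDl (C : numClosedFieldType) x y (w : 'rV[C]_k3rank) :
  dot2C (x + y) w = dot2C x w + dot2C y w.
Proof.
rewrite /dot2C -big_split; apply: eq_bigr => i _; rewrite -big_split.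
by apply: eq_bigr => j _; rewrite mxE mulrDl rmorphD mulrDl.
Qed.

Lemma dot2CZl (C : numClosedFieldType) c x (w : 'rV[C]_k3rank) :
  dot2C (c *: x) w = ratr c * dot2C x w.
Proof.
rewrite /dot2C mulr_sumr; apply: eq_bigr => i _; rewrite mulr_sumr.
by apply: eq_bigr => j _; rewrite mxE -mulrA rmorphM mulrA.
Qed.

Lemma dot2CNl (C : numClosedFieldType) x (w : 'rV[C]_k3rank) :
  dot2C (- x) w = - dot2C x w.
Proof. by rewrite -scaleN1r dot2CZl rmorphN1 mulN1r. Qed.

Lemma dot2C0l (C : numClosedFieldType) (w : 'rV[C]_k3rank) : dot2C 0 w = 0.
Proof. by rewrite -(scale0r (0 : 'rV[rat]_k3rank)) dot2CZl rmorph0 mul0r. Qed.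

Lemma mukai_eq (v w : mukai) :
  mk0 v = mk0 w -> mk2 v = mk2 w -> mk4 v = mk4 w -> v = w.
Proof. by case: v => ? ? ?; case: w => ? ? ? /= -> -> ->. Qed.

Lemma rat_field_theory :
  field_theory (0 : rat) 1 +%R *%R (fun x y => x - y) -%R (fun x y => x / y) GRing.inv (@eq rat).
Proof.
constructor.
- constructor.
  + exact: add0r. + exact: addrC. + exact: addrA. + exact: mul1r. + exact: mulrC.
  + exact: mulrA. + exact: mulrDl. + by []. + exact: subrr.
- by move/eqP; rewrite oner_eq0.
- by [].
- by move=> p /eqP p0; rewrite mulVf.
Qed.

Section Gen.
Variables (T : Type) (z o : T) (ad mu sb : T -> T -> T) (op iv : T -> T) (dv : T -> T -> T).
Hypothesis FT : field_theory z o ad mu sb op dv iv (@eq T).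
Add Field GF : FT.
Declare Scope gsc.
Local Notation "x + y" := (ad x y) : gsc.
Local Notation "x * y" := (mu x y) : gsc.
Local Notation "x - y" := (sb x y) : gsc.
Local Notation "- x" := (op x) : gsc.
Local Notation "x / y" := (dv x y) : gsc.
Local Notation "x ^-1" := (iv x) : gsc.
Local Open Scope gsc.

Lemma gI_add (b b2 X X2 a a2 be d : T) : o + o <> z -> d <> z -> (b + b2) / d + (X + X2) + d * (a + a2) / (o + o) * be = b / d + X + d * a / (o + o) * be + (b2 / d + X2 + d * a2 / (o + o) * be).
Proof. intros; field; auto. Qed.

Lemma gI_opp (b X a be d : T) : o + o <> z -> d <> z -> (- b) / d + (- X) + d * (- a) / (o + o) * be = - (b / d + X + d * a / (o + o) * be).
Proof. intros; field; auto. Qed.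

Lemma gI_eB (L P Q a a2 b b2 be : T) : o + o <> z -> True -> L + a2 * Q + (a * P + a * (a2 * be)) - a * (b2 + P + a2 / (o + o) * be) - a2 * (b + Q + a / (o + o) * be) = L - a * b2 - a2 * b.
Proof. intros; field; auto. Qed.

Lemma gI_kap (L a a2 b b2 d : T) : o + o <> z -> d <> z -> L - d * a * (b2 / d) - d * a2 * (b / d) = L - a * b2 - a2 * b.
Proof. intros; field; auto. Qed.

Lemma gI_surj (c Y a be d : T) : o + o <> z -> d <> z -> d * (c - Y - a / (o + o) * be) / d + Y + a / (o + o) * be = c.
Proof. intros; field; auto. Qed.

Lemma gI_k (b Q a be d : T) : o + o <> z -> d <> z -> b / d + Q + d * a / (o + o) * be = - (b + d * Q + a * (d * (d * be) / (o + o))) * - d^-1.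
Proof. intros; field; auto. Qed.

Lemma gI_b0 (c Y q be d : T) : o + o <> z -> True -> d * (c - Y - d * q / (o + o) * be) = d * c - d * Y - q * (d * (d * be) / (o + o)).
Proof. intros; field; auto. Qed.

End Gen.

Lemma two_neq0 : (1 + 1 : rat) <> 0. Proof. by []. Qed.

Lemma I_add (b b2 X X2 a a2 be d : rat) : d <> 0 -> (b + b2) / d + (X + X2) + d * (a + a2) / (1 + 1) * be = b / d + X + d * a / (1 + 1) * be + (b2 / d + X2 + d * a2 / (1 + 1) * be).
Proof. move=> H; exact: (@gI_add _ _ _ _ _ _ _ _ _ rat_field_theory b b2 X X2 a a2 be d two_neq0 H). Qed.

Lemma I_opp (b X a be d : rat) : d <> 0 -> (- b) / d + (- X) + d * (- a) / (1 + 1) * be = - (b / d + X + d * a / (1 + 1) * be).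
Proof. move=> H; exact: (@gI_opp _ _ _ _ _ _ _ _ _ rat_field_theory b X a be d two_neq0 H). Qed.

Lemma I_eB (L P Q a a2 b b2 be : rat) : True -> L + a2 * Q + (a * P + a * (a2 * be)) - a * (b2 + P + a2 / (1 + 1) * be) - a2 * (b + Q + a / (1 + 1) * be) = L - a * b2 - a2 * b.
Proof. move=> H; exact: (@gI_eB _ _ _ _ _ _ _ _ _ rat_field_theory L P Q a a2 b b2 be two_neq0 H). Qed.

Lemma I_kap (L a a2 b b2 d : rat) : d <> 0 -> L - d * a * (b2 / d) - d * a2 * (b / d) = L - a * b2 - a2 * b.
Proof. move=> H; exact: (@gI_kap _ _ _ _ _ _ _ _ _ rat_field_theory L a a2 b b2 d two_neq0 H). Qed.

Lemma I_surj (c Y a be d : rat) : d <> 0 -> d * (c - Y - a / (1 + 1) * be) / d + Y + a / (1 + 1) * be = c.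
Proof. move=> H; exact: (@gI_surj _ _ _ _ _ _ _ _ _ rat_field_theory c Y a be d two_neq0 H). Qed.

Lemma I_k (b Q a be d : rat) : d <> 0 -> b / d + Q + d * a / (1 + 1) * be = - (b + d * Q + a * (d * (d * be) / (1 + 1))) * - d^-1.
Proof. move=> H; exact: (@gI_k _ _ _ _ _ _ _ _ _ rat_field_theory b Q a be d two_neq0 H). Qed.

Lemma I_b0 (c Y q be d : rat) : True -> d * (c - Y - d * q / (1 + 1) * be) = d * c - d * Y - q * (d * (d * be) / (1 + 1)).
Proof. move=> H; exact: (@gI_b0 _ _ _ _ _ _ _ _ _ rat_field_theory c Y q be d two_neq0 H). Qed.

Lemma two_rat : (2%:R : rat) = 1 + 1.
Proof. by []. Qed.

Lemma f_add d B x y : (d%:R : rat) <> 0 ->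
  eB B (kappa d (madd x y)) = madd (eB B (kappa d x)) (eB B (kappa d y)).
Proof.
move=> dn0; case: x => a l b; case: y => a2 l2 b2; apply: mukai_eq => /=.
- by rewrite mulrDr.
- by rewrite mulrDr scalerDl addrACA.
- by rewrite dot2Dr two_rat I_add.
Qed.

Lemma f_opp d B x : (d%:R : rat) <> 0 ->
  eB B (kappa d (mopp x)) = mopp (eB B (kappa d x)).
Proof.
move=> dn0; case: x => a l b; apply: mukai_eq => /=.
- by rewrite mulrN.
- by rewrite mulrN scaleNr opprD.
- by rewrite dot2Nr two_rat I_opp.
Qed.

Lemma eB_iso B u v : mpair (eB B u) (eB B v) = mpair u v.
Proof.
case: u => a l b; case: v => a2 l2 b2; rewrite /mpair /=.
rewrite dot2Dl !dot2Dr !dot2Zl !dot2Zr (dot2_sym l B) two_rat.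
exact: I_eB.
Qed.

Lemma kappa_iso d u v : (d%:R : rat) <> 0 -> mpair (kappa d u) (kappa d v) = mpair u v.
Proof.
move=> dn0; case: u => a l b; case: v => a2 l2 b2; rewrite /mpair /=.
exact: I_kap.
Qed.

Lemma int_nat (k : rat) : k \is a Num.int -> exists n : nat, k = n%:R \/ k = - n%:R.
Proof.
move/intrP => [z ->]; case: z => n.
- by exists n; left.
- by exists n.+1; right; rewrite NegzE mulrNz.
Qed.

Lemma zspan_intmul P c k : zspan P (Mk 0 0 c) -> k \is a Num.int -> zspan P (Mk 0 0 (k * c)).
Proof.
move=> hc /int_nat [n hn].
have hnat : forall m : nat, zspan P (Mk 0 0 (m%:R * c)).
  elim=> [|m IH].
    have -> : Mk 0 0 (0%:R * c) = mzero by apply: mukai_eq; rewrite //= mul0r.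
    exact: zspan0.
  have -> : Mk 0 0 (m.+1%:R * c) = madd (Mk 0 0 (m%:R * c)) (Mk 0 0 c).
    by apply: mukai_eq; rewrite /= ?addr0 // mulrSr mulrDl mul1r.
  exact: zspan_add.
case: hn => ->; first exact: hnat.
have -> : Mk 0 0 (- n%:R * c) = mopp (Mk 0 0 (n%:R * c)).
  by apply: mukai_eq; rewrite /= ?oppr0 // mulNr.
exact: zspan_opp.
Qed.

Lemma dB_int d B l : intvec (d%:R *: B) -> intvec l -> (d%:R * dot2 B l) \is a Num.int.
Proof. by move=> hdB hl; rewrite -dot2Zl dot2_int. Qed.

Lemma dBB_int d B : intvec (d%:R *: B) -> (d%:R * (d%:R * dot2 B B) / 2%:R) \is a Num.int.
Proof. by move=> hdB; rewrite -dot2Zr -dot2Zl dot2_even. Qed.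

Lemma part1 (C : numClosedFieldType) (omega : 'rV[C]_k3rank) B d x :
  (d%:R : rat) <> 0 -> intvec (d%:R *: B) -> tNS omega x ->
  tNSB_ext omega B d (eB B (kappa d x)).
Proof.
move=> dn0 hdB; case: x => a l b [/= ha [hl1 hl2] hb].
set k := - (b + d%:R * dot2 B l + a * (d%:R * (d%:R * dot2 B B) / 2%:R)).
have hk : k \is a Num.int.
  rewrite /k rpredN; apply: rpredD; first by apply: rpredD => //; exact: dB_int.
  by apply: rpredM => //; exact: dBB_int.
have -> : eB B (kappa d (Mk a l b)) =
   madd (Mk (d%:R * a) (l + (d%:R * a) *: B) 0) (Mk 0 0 (k * - (d%:R)^-1)).
  apply: mukai_eq; rewrite /= ?addr0 // add0r /k.
  by rewrite two_rat I_k.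
apply: zspan_add.
  apply: zspan_gen; left; split; first split => /=.
  - by rewrite rpredM ?natr_int.
  - rewrite mulrC -scalerA; apply: intvecD => //; exact: intvecZ.
  - exact: rpred0.
  by rewrite /mpair_eBomega /= dot2CDl dot2CZl hl2 add0r subrr.
apply: zspan_intmul => //; apply: zspan_gen; by right.
Qed.

Lemma surj_gen (C : numClosedFieldType) (omega : 'rV[C]_k3rank) B d v :
  brauer_order omega B d -> intvec (d%:R *: B) -> tNSB omega B v ->
  exists2 x, tNS omega x & eB B (kappa d x) = v.
Proof.
move=> [d0 _ hmin] hdB.
have dn0 : (d%:R : rat) <> 0 by apply/eqP; rewrite pnatr_eq0 -lt0n.
case: v => a m c [[/= ha hm hc] /= he].
rewrite /mpair_eBomega /= in he.
move/intrP: ha => [z hz].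
have dz : (d%:Z != 0) by rewrite eqz_nat -lt0n.
have [n hn] : exists n : nat, (z %% d)%Z = n%:Z.
  by exists (absz (z %% d)%Z); rewrite gez0_abs // modz_ge0.
have hnd : (n < d)%N.
  by rewrite -ltz_nat -hn; move: (ltz_mod z dz).
set q := (z %/ d)%Z.
have hzq := divz_eq z d; rewrite hn -/q in hzq.
have ha' : a = q%:~R * d%:R + n%:R.
  by rewrite hz {1}hzq rmorphD rmorphM.
have haI : a \is a Num.int by rewrite hz intr_int.
move/subr0_eq: (he) => he'.
have n0 : n = 0%N.
  case: (posnP n) => // npos; exfalso; apply: (hmin n npos hnd).
  exists (a *: B - m), (m - q%:~R *: (d%:R *: B)); split; last split.
  - exists d; split => //; split.
    + rewrite scalerBr scalerA mulrC -scalerA; apply: intvecB.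
        by apply: intvecZ.
      by apply: intvecZ => //; exact: natr_int.
    + by rewrite dot2CZl dot2CDl dot2CNl dot2CZl he' subrr mulr0.
  - by apply: intvecB => //; apply: intvecZ => //; exact: intr_int.
  - by rewrite addrA subrK scalerA -scalerBl ha' addrAC subrr add0r.
have hqa : d%:R * q%:~R = a by rewrite ha' n0 addr0 mulrC.
set l0 := m - a *: B.
have hl0 : intvec l0.
  rewrite /l0 -hqa mulrC -scalerA; apply: intvecB => //.
  by apply: intvecZ => //; exact: intr_int.
have hl0w : dot2C l0 omega = 0 by rewrite /l0 dot2CDl dot2CNl dot2CZl.
exists (Mk q%:~R l0 (d%:R * (c - dot2 B l0 - a / 2%:R * dot2 B B))).
  split => /=; first exact: intr_int.
    by split.
  have hE := dBB_int d B hdB; rewrite two_rat in hE.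
  rewrite -hqa two_rat I_b0 //.
  apply: rpredB; first apply: rpredB.
  - by apply: rpredM => //; exact: natr_int.
  - exact: dB_int.
  - by apply: rpredM; [exact: intr_int | exact: hE].
apply: mukai_eq => /=.
- exact: hqa.
- by rewrite hqa /l0 subrK.
- by rewrite hqa two_rat I_surj.
Qed.

Lemma tNS_add (C : numClosedFieldType) (omega : 'rV[C]_k3rank) x y :
  tNS omega x -> tNS omega y -> tNS omega (madd x y).
Proof.
case: x => a l b; case: y => a2 l2 b2 [/= ha [hl hlw] hb] [/= ha2 [hl2 hlw2] hb2].
split => /=; [exact: rpredD | split | exact: rpredD].
- exact: intvecD.
- by rewrite dot2CDl hlw hlw2 addr0.
Qed.

Lemma tNS_opp (C : numClosedFieldType) (omega : 'rV[C]_k3rank) x :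
  tNS omega x -> tNS omega (mopp x).
Proof.
case: x => a l b [/= ha [hl hlw] hb].
split => /=; [by rewrite rpredN | split | by rewrite rpredN].
- exact: intvecN.
- by rewrite dot2CNl hlw oppr0.
Qed.

Theorem proposition2p4 (C : numClosedFieldType) (omega : 'rV[C]_k3rank)
  (h B : 'rV[rat]_k3rank) (d : nat) :
  is_period omega -> is_ample omega h ->
  brauer_order omega B d -> intvec (d%:R *: B) ->
  lattice_isometry (tNS omega) (tNSB_ext omega B d) (fun v => eB B (kappa d v)) /\
  orientation_preserving h B (fun v => eB B (kappa d v)).
Proof.
move=> _ [_ hh _] hbo hdB.
have [d0 _ _] := hbo.
have dn0 : (d%:R : rat) <> 0 by apply/eqP; rewrite pnatr_eq0 -lt0n.
split.
  split.
  - by move=> x hx; apply: part1.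
  - by move=> x y _ _; apply: f_add.
  - case=> a l b; case=> a2 l2 b2 _ _ e.
    have e0 := congr1 mk0 e; have e2 := congr1 mk2 e; have e4 := congr1 mk4 e.
    rewrite /= in e0 e2 e4.
    have ea : a = a2 by apply: (@mulfI _ (d%:R)) => //; apply/eqP.
    subst a2.
    move/addIr: e2 => el; subst l2.
    move/addIr/addIr: e4 => eb.
    have -> : b = b2.
      by apply: (@mulIf _ ((d%:R)^-1)) => //; rewrite invr_eq0; apply/eqP.
    by [].
  - move=> y hy; elim: hy => [|v [hv|->]|v w _ [x hx <-] _ [x2 hx2 <-]|v _ [x hx <-]].
    + exists mzero.
        split => /=; [exact: rpred0 | split | exact: rpred0].
        * exact: intvec0.
        * exact: dot2C0l.
      apply: mukai_eq => /=; first by rewrite mulr0.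
        by rewrite mulr0 scale0r addr0.
      by rewrite dot2_0r !mulr0 !mul0r !addr0.
    + exact: surj_gen.
    + exists (Mk 0 0 (-1)).
        split => /=; [exact: rpred0 | split | by rewrite rpredN rpred1].
        * exact: intvec0.
        * exact: dot2C0l.
      apply: mukai_eq => /=; first by rewrite mulr0.
        by rewrite mulr0 scale0r addr0.
      by rewrite dot2_0r !mulr0 !mul0r !addr0 mulN1r.
    + by exists (madd x x2); [apply: tNS_add | apply: f_add].
    + by exists (mopp x); [apply: tNS_opp | apply: f_opp].
  - by move=> x y _ _; rewrite eB_iso kappa_iso.
rewrite /orientation_preserving /same_orientation !eB_iso.
rewrite /mpair /= !dot2_0l !dot2_0r !mulr0 !mul0r !subr0 !mulr1 !mul1r !sub0r ?mulrN1 ?mulN1r ?opprK ?oppr0 ?subr0 ?mul0r.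
rewrite mulr_gt0 // addr_gt0 // ?invr_gt0 ltr0n //.
Qed.
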